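(* Backward proof search in $\mathsf{G}(\mathbf{KT}^+_D)$ always terminates: there is no infinite sequence of T-sequents $S_0,S_1,S_2,\dots$ such that, for every $i$, $S_{i+1}$ is a premise of some instance of a rule of $\mathsf{G}(\mathbf{KT}^+_D)$ whose conclusion is $S_i$.
   Context: Language: fix a finite nonempty set $\mathsf{Agt}$ of agents and a countable set $\mathsf{Prop}$ of propositional variables; $\mathsf{Grp}$ is the set of nonempty subsets of $\mathsf{Agt}$. Formulas: $\alpha::=p\mid\bot\mid\alpha\wedge\alpha\mid\alpha\vee\alpha\mid\alpha\rightarrow\alpha\mid\neg\alpha\mid D_G\alpha$ ($p\in\mathsf{Prop}$, $G\in\mathsf{Grp}$). Outmost-boxed formula: one of the form $D_G\gamma$. Calculus $\mathsf{G}(\mathbf{KT}^+_D)$: a T-sequent $\Sigma\mid\Gamma\Rightarrow\Delta$ consists of finite multisets $\Gamma,\Delta$ of formulas and a finite multiset $\Sigma$ of outmost-boxed formulas. Initial sequents: $\Sigma\mid\Gamma,p\Rightarrow p,\Delta$ ($p\in\mathsf{Prop}$) and $\Sigma\mid\bot,\Gamma\Rightarrow\Delta$. Propositional rules (with $\Sigma$ unchanged): $(R\wedge)$ from $\Sigma\mid\Gamma\Rightarrow\Delta,\alpha_1$ and $\Sigma\mid\Gamma\Rightarrow\Delta,\alpha_2$ infer $\Sigma\mid\Gamma\Rightarrow\Delta,\alpha_1\wedge\alpha_2$; $(L\wedge)$ from $\Sigma\mid\alpha_1,\alpha_2,\Gamma\Rightarrow\Delta$ infer $\Sigma\mid\alpha_1\wedge\alpha_2,\Gamma\Rightarrow\Delta$;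 $(R\vee)$ from $\Sigma\mid\Gamma\Rightarrow\Delta,\alpha_1,\alpha_2$ infer $\Sigma\mid\Gamma\Rightarrow\Delta,\alpha_1\vee\alpha_2$; $(L\vee)$ from $\Sigma\mid\alpha_1,\Gamma\Rightarrow\Delta$ and $\Sigma\mid\alpha_2,\Gamma\Rightarrow\Delta$ infer $\Sigma\mid\alpha_1\vee\alpha_2,\Gamma\Rightarrow\Delta$; $(R\rightarrow)$ from $\Sigma\mid\alpha_1,\Gamma\Rightarrow\Delta,\alpha_2$ infer $\Sigma\mid\Gamma\Rightarrow\Delta,\alpha_1\rightarrow\alpha_2$; $(L\rightarrow)$ from $\Sigma\mid\Gamma\Rightarrow\Delta,\alpha_1$ and $\Sigma\mid\alpha_2,\Gamma\Rightarrow\Delta$ infer $\Sigma\mid\alpha_1\rightarrow\alpha_2,\Gamma\Rightarrow\Delta$; $(R\neg)$ from $\Sigma\mid\alpha,\Gamma\Rightarrow\Delta$ infer $\Sigma\mid\Gamma\Rightarrow\Delta,\neg\alpha$; $(L\neg)$ from $\Sigma\mid\Gamma\Rightarrow\Delta,\alpha$ infer $\Sigma\mid\neg\alpha,\Gamma\Rightarrow\Delta$. Modal rules: $(D_K^+)$: from $\emptyset\mid\alpha_1,\dots,\alpha_n\Rightarrow\beta$ ($n\ge0$) infer $\Sigma,D_{G_1}\alpha_1,\dots,D_{G_n}\alpha_n\mid\Pi\Rightarrow D_G\beta,\Omega$, provided $G_i\subseteq G$ for all $i$, $\Sigma$ consists only of formulas $D_H\gamma$ with $H\not\subseteq G$,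 $\Pi$ only of propositional variables and $\bot$, and $\Omega$ only of propositional variables, $\bot$ and outmost-boxed formulas; $(D_T^+)$: from $D_G\alpha,\Sigma\mid\Gamma,\alpha\Rightarrow\Delta$ infer $\Sigma\mid\Gamma,D_G\alpha\Rightarrow\Delta$. *)

(* Defs.v *)
From mathcomp Require Import all_boot.
From Stdlib Require Import List Permutation.
Import ListNotations.

Set Implicit Arguments.
Unset Strict Implicit.
Unset Printing Implicit Defensive.

Section Logic.
Variable Agt : finType.

Definition grp := {G : {set Agt} | G != set0}.

Inductive form : Type :=
| Var : nat -> form
| Bot : form
| And : form -> form -> form
| Or  : form -> form -> form
| Imp : form -> form -> form
| Neg : form -> form
| Box : grp -> form -> form.

(* Outmost-boxed formulas D_G g are represented by the pair (G, g). *)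
Definition boxed := (grp * form)%type.
Definition box_of (b : boxed) : form := Box b.1 b.2.

(* T-sequent  Sigma | Gamma => Delta ; lists read as multisets (see tseq_equiv) *)
Definition tseq := (list boxed * list form * list form)%type.

Definition mk (S : list boxed) (G D : list form) : tseq := (S, G, D).

Definition is_var_or_bot (f : form) : Prop :=
  match f with Var _ | Bot => True | _ => False end.
Definition is_var_bot_or_boxed (f : form) : Prop :=
  match f with Var _ | Bot | Box _ _ => True | _ => False end.

Inductive rule_inst : list tseq -> tseq -> Prop :=
| r_init_var : forall S G D p,
    rule_inst [] (mk S (Var p :: G) (Var p :: D))
| r_init_bot : forall S G D,
    rule_inst [] (mk S (Bot :: G) D)
| r_Rand : forall S G D a1 a2,
    rule_inst [mk S G (a1 :: D); mk S G (a2 :: D)] (mk S G (And a1 a2 :: D))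
| r_Land : forall S G D a1 a2,
    rule_inst [mk S (a1 :: a2 :: G) D] (mk S (And a1 a2 :: G) D)
| r_Ror : forall S G D a1 a2,
    rule_inst [mk S G (a1 :: a2 :: D)] (mk S G (Or a1 a2 :: D))
| r_Lor : forall S G D a1 a2,
    rule_inst [mk S (a1 :: G) D; mk S (a2 :: G) D] (mk S (Or a1 a2 :: G) D)
| r_Rimp : forall S G D a1 a2,
    rule_inst [mk S (a1 :: G) (a2 :: D)] (mk S G (Imp a1 a2 :: D))
| r_Limp : forall S G D a1 a2,
    rule_inst [mk S G (a1 :: D); mk S (a2 :: G) D] (mk S (Imp a1 a2 :: G) D)
| r_Rneg : forall S G D a,
    rule_inst [mk S (a :: G) D] (mk S G (Neg a :: D))
| r_Lneg : forall S G D a,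
    rule_inst [mk S G (a :: D)] (mk S (Neg a :: G) D)
| r_DK : forall (S : list boxed) (bs : list boxed) (Pi Om : list form)
                (Gr : grp) (b : form),
    (forall x, In x bs -> val x.1 \subset val Gr) ->
    (forall x, In x S -> ~~ (val x.1 \subset val Gr)) ->
    (forall f, In f Pi -> is_var_or_bot f) ->
    (forall f, In f Om -> is_var_bot_or_boxed f) ->
    rule_inst [mk [] (map snd bs) [b]] (mk (S ++ bs) Pi (Box Gr b :: Om))
| r_DT : forall S G D (Gr : grp) a,
    rule_inst [mk ((Gr, a) :: S) (a :: G) D] (mk S (Box Gr a :: G) D).

Definition tseq_equiv (s t : tseq) : Prop :=
  Permutation s.1.1 t.1.1 /\ Permutation s.1.2 t.1.2 /\ Permutation s.2 t.2.

Definition back_step (c p : tseq) : Prop :=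
  exists ps c0 p0, rule_inst ps c0 /\ tseq_equiv c c0 /\ In p0 ps /\ tseq_equiv p0 p.

End Logic.

(* Main.v *)
Require Import Defs.
From mathcomp Require Import all_boot.
From Stdlib Require Import List Permutation Lia.
From mathcomp Require Import zify.
Import ListNotations.

Section Aux.
Variable Agt : finType.

Fixpoint fsize (f : form Agt) : nat :=
  match f with
  | Var _ | Bot => 1
  | And a b | Or a b | Imp a b => S (fsize a + fsize b)
  | Neg a => S (fsize a)
  | Box _ a => S (fsize a)
  end.

Fixpoint fdep (f : form Agt) : nat :=
  match f with
  | Var _ | Bot => 0
  | And a b | Or a b | Imp a b => Nat.max (fdep a) (fdep b)
  | Neg a => fdep a
  | Box _ a => S (fdep a)
  end.

Definition sdep (s : tseq Agt) : nat :=
  Nat.max (list_max (map (fun b => fdep (box_of b)) s.1.1))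
    (Nat.max (list_max (map fdep s.1.2)) (list_max (map fdep s.2))).

Definition ssz (s : tseq Agt) : nat :=
  list_sum (map fsize s.1.2) + list_sum (map fsize s.2).

Lemma equiv_meas s t : tseq_equiv s t -> sdep s = sdep t /\ ssz s = ssz t.
Proof.
  move=> [H1 [H2 H3]]; unfold sdep, ssz.
  rewrite (Permutation_list_max (Permutation_map _ H1))
          (Permutation_list_max (Permutation_map _ H2))
          (Permutation_list_max (Permutation_map _ H3))
          (Permutation_list_sum (Permutation_map _ H2))
          (Permutation_list_sum (Permutation_map _ H3)).
  by split.
Qed.

Lemma list_max_cons a l : list_max (a :: l) = Nat.max a (list_max l).
Proof. reflexivity. Qed.

Lemma fold_max_ge x l : Peano.le x (fold_right Nat.max x l).
Proof. elim: l => [|a l IH] /=; lia. Qed.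

Lemma snd_dep (bs : list (boxed Agt)) :
  Peano.le (fold_right Nat.max 0 (map fdep (map snd bs)))
    (Nat.pred (fold_right Nat.max 0 (map (fun x : boxed Agt => S (fdep x.2)) bs))).
Proof.
  elim: bs => [|x bs IH]; first by simpl; lia.
  change (Peano.le (Nat.max (fdep x.2) (fold_right Nat.max 0 (map fdep (map snd bs))))
    (Nat.pred (Nat.max (S (fdep x.2)) (fold_right Nat.max 0 (map (fun x : boxed Agt => S (fdep x.2)) bs))))).
  lia.
Qed.

Lemma rule_meas ps c p : rule_inst ps c -> In p ps ->
  Peano.lt (sdep p) (sdep c) \/
  (Peano.le (sdep p) (sdep c) /\ Peano.lt (ssz p) (ssz c)).
Proof.
  case=> /=; intros; repeat match goal with
    | H : _ \/ _ |- _ => destruct H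
    | H : False |- _ => destruct H end; subst;
  unfold sdep, ssz, mk, box_of in *;
  cbn [fst snd List.map list_sum fsize fdep list_max fold_right] in *; try lia.
  left. rewrite List.map_app fold_right_app. have := snd_dep bs. have := fold_max_ge (fold_right Nat.max 0 (map (fun b0 : boxed Agt => (fdep b0.2).+1) bs)) (map (fun b0 : boxed Agt => (fdep b0.2).+1) S). lia.
Qed.

Lemma step_meas c p : back_step c p ->
  Peano.lt (sdep p) (sdep c) \/
  (Peano.le (sdep p) (sdep c) /\ Peano.lt (ssz p) (ssz c)).
Proof.
  move=> [ps [c0 [p0 [Hr [Hc [Hin Hp]]]]]].
  have [E1 E2] := equiv_meas _ _ Hc. have [E3 E4] := equiv_meas _ _ Hp.
  have := rule_meas _ _ _ Hr Hin. lia.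
Qed.

Lemma no_inf : forall d n (s : nat -> tseq Agt),
  (forall i, back_step (s i) (s i.+1)) ->
  Peano.le (sdep (s 0)) d -> Peano.le (ssz (s 0)) n -> False.
Proof.
  elim=> [|d IHd] n; elim: n => [|n IHn] s Hs Hd Hn;
  (have := step_meas _ _ (Hs 0) => -[H|[H1 H2]]).
  - lia. - lia. - lia.
  - apply: (IHn (fun i => s i.+1)) => //; lia.
  - apply: (IHd (ssz (s 1)) (fun i => s i.+1)) => //; lia.
  - lia.
  - apply: (IHd (ssz (s 1)) (fun i => s i.+1)) => //; lia.
  - apply: (IHn (fun i => s i.+1)) => //; lia.
Qed.
End Aux.

Theorem proposition6p7 (Agt : finType) (HAgt : 0 < #|Agt|) :
  ~ (exists s : nat -> tseq Agt, forall i : nat, back_step (s i) (s i.+1)).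
Proof.
  move=> [s Hs].
  exact (@no_inf Agt _ _ s Hs (le_n _) (le_n _)).
Qed.
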